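(* Let $k$ be a positive integer and $\mathbb{A}$ an alphabet with exactly $k$ letters. The number of extremal $XYX$-avoiding words over $\mathbb{A}$ is $k!$.
   Context: A word is a finite sequence of letters. A factor of $W$ is a word $U$ with $W=W_1UW_2$ for some (possibly empty) words $W_1,W_2$. A word $W$ contains the pattern $XYX$ if some factor of $W$ can be written as $ABA$ with $A,B$ nonempty words ($A$ and $B$ may be equal); otherwise $W$ avoids $XYX$. An extension of a word $W$ over $\mathbb{A}$ is any word $W_1xW_2$ with $W=W_1W_2$ ($W_1,W_2$ possibly empty) and $x\in\mathbb{A}$. A word over $\mathbb{A}$ is extremal $XYX$-avoiding if it avoids $XYX$ and every extension of it contains $XYX$. *)

(* Defs.v *)
From mathcomp Require Import all_boot.
Set Implicit Arguments. Unset Strict Implicit. Unset Printing Implicit Defensive.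

Definition factor (T : Type) (U W : seq T) : Prop :=
  exists W1 W2, W = W1 ++ U ++ W2.

Definition containsXYX (T : Type) (W : seq T) : Prop :=
  exists A B : seq T, A <> [::] /\ B <> [::] /\ factor (A ++ B ++ A) W.

Definition avoidsXYX (T : Type) (W : seq T) : Prop := ~ containsXYX W.

Definition extension (T : Type) (W V : seq T) : Prop :=
  exists W1 W2 (x : T), W = W1 ++ W2 /\ V = W1 ++ x :: W2.

Definition extremalXYX (T : Type) (W : seq T) : Prop :=
  avoidsXYX W /\ forall V, extension W V -> containsXYX V.

(* Main.v *)
Require Import Defs.
From mathcomp Require Import all_boot.
From Stdlib Require Import Setoid.
From mathcomp Require Import zify.
Set Implicit Arguments. Unset Strict Implicit.

Fixpoint av {T : eqType} (W : seq T) : bool :=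
  if W is y :: W' then (y \notin behead W') && av W' else true.

Fixpoint dbl {T : Type} (p : seq T) : seq T :=
  if p is x :: p' then x :: x :: dbl p' else [::].

Lemma contains1P (T : Type) (W : seq T) : containsXYX W <->
  exists W1 a B W2, B <> [::] /\ W = W1 ++ a :: B ++ a :: W2.
Proof.
split.
- move=> [[|a A'] [B [hA [hB [W1 [W2 E]]]]]] //.
  exists W1, a, (A' ++ B), (A' ++ W2); split; first by destruct A'; destruct B.
  by rewrite E /= -!catA.
- move=> [W1 [a [B [W2 [hB E]]]]].
  exists [:: a], B; split; first by []. split; first by []. exists W1, W2; by rewrite E /= -!catA.
Qed.

Lemma contains_cons (T : eqType) y (W : seq T) :
  containsXYX (y :: W) <-> containsXYX W \/ y \in behead W.
Proof.
rewrite !contains1P; split.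
- move=> [[|w W1] [a [B [W2 [hB E]]]]].
  + case: E => <- ->; right; case: B hB => [//|b B'] _ /=.
    by rewrite mem_cat in_cons eqxx orbT.
  + case: E => _ ->; left; by exists W1, a, B, W2.
- move=> [[W1 [a [B [W2 [hB E]]]]] | H].
  + exists (y :: W1), a, B, W2; by rewrite E.
  + case: W H => [|z W'] //= H; case/splitPr: H => u v.
    by exists [::], y, (z :: u), v.
Qed.

Lemma avP (T : eqType) (W : seq T) : containsXYX W <-> ~~ av W.
Proof.
elim: W => [|y W IH].
  split => //; rewrite contains1P => [[[|w W1] [a [B [W2 [hB E]]]]]] //.
rewrite contains_cons /= negb_and negbK IH.
split => [[H|H]|/orP [H|H]]; rewrite ?H ?orbT //; by [left | right].
Qed.

Lemma avoids_av (T : eqType) (W : seq T) : avoidsXYX W <-> av W.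
Proof.
rewrite /avoidsXYX; split => H.
- case E: (av W) => //; exfalso; apply: H; apply/avP; by rewrite E.
- by move/avP; rewrite H.
Qed.

Lemma count_split (T : eqType) (x : T) s n : n < count_mem x s ->
  exists s1 s2, s = s1 ++ x :: s2 /\ n <= count_mem x s2.
Proof.
elim: s => [|y s IH] //=.
case: eqP => [<-|ne] H.
- exists [::], s; split => //; by rewrite add1n ltnS in H.
- rewrite add0n in H; case: (IH H) => s1 [s2 [E H2]].
  exists (y :: s1), s2; by rewrite E.
Qed.

Lemma count3 (T : eqType) (x : T) s : 2 < count_mem x s -> containsXYX s.
Proof.
move=> H; apply/contains1P.
case: (count_split H) => s1 [r1 [E1 H1]].
case: (count_split H1) => s2 [r2 [E2 H2]].
case: (count_split H2) => s3 [r3 [E3 H3]].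
exists s1, x, (s2 ++ x :: s3), r3; split; first by destruct s2.
by rewrite E1 E2 E3 -catA.
Qed.

Lemma mem_dbl (T : eqType) (p : seq T) z : (z \in dbl p) = (z \in p).
Proof. elim: p => [|x p IH] //=; by rewrite !in_cons IH orbA orbb. Qed.

Lemma count_dbl (T : eqType) (x : T) p : count_mem x (dbl p) = (count_mem x p).*2.
Proof. elim: p => [|y p IH] //=; by rewrite IH doubleD addnA addnn. Qed.

Lemma av_dbl (T : eqType) (p : seq T) : uniq p -> av (dbl p).
Proof.
elim: p => [|x p IH] //= /andP [xp up].
rewrite mem_dbl xp IH // andbT.
by apply/negP => /mem_behead; rewrite mem_dbl; apply/negP.
Qed.

Lemma dbl_inj (T : Type) : injective (@dbl T).
Proof.
elim=> [|x p IH] [|y q] //= E; case: E => -> _ E; by rewrite (IH _ E).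
Qed.

Lemma av_ins (T : eqType) (W1 W2 : seq T) y : y \notin W1 -> y \notin W2 ->
  av (W1 ++ y :: W2) -> av (W1 ++ y :: y :: W2).
Proof.
elim: W1 => [|z W1 IH] /=.
- move=> _ H2 /andP [H3 H4]; by rewrite H2 H3 H4.
- rewrite in_cons negb_or => /andP [yz yW1] H2 /andP [zn aW].
  apply/andP; split; last exact: IH.
  clear IH yW1 aW; case: W1 zn => [|u W1] /=.
  + by rewrite in_cons negb_or eq_sym yz => ->.
  + rewrite !mem_cat !in_cons; by case: (z == y); rewrite ?orbT.
Qed.

Lemma av_struct (T : eqType) n (W : seq T) : size W <= n -> av W ->
  (forall z, z \in W -> count_mem z W = 2) -> exists p, uniq p /\ W = dbl p.
Proof.
elim: n W => [|n IH] [|y W'] //= hs; try by exists [::].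
case: W' hs => [|z W''] hs /andP [H1 H2] Hc.
  by have := Hc y; rewrite in_cons eqxx /= => /(_ isT).
have Hy : count_mem y (z :: W'') = 1.
  by have := Hc y; rewrite in_cons eqxx /= add1n => /(_ isT) [].
move: H1 => /= H1.
have yz : z = y.
  have : y \in z :: W'' by rewrite -has_pred1 has_count Hy.
  by rewrite in_cons (negbTE H1) orbF => /eqP.
subst z.
move: H2 => /= /andP [_ H2].
have HW : forall z, z \in W'' -> count_mem z W'' = 2.
  move=> z zW; have := Hc z; rewrite !in_cons zW !orbT /= => /(_ isT).
  have -> : (y == z) = false by apply/negbTE/eqP => e; rewrite e zW in H1.
  by [].
case: (IH W'' _ H2 HW) => [|p [up E]]; first by rewrite -ltnS ltnW.
exists (y :: p); rewrite /= E -mem_dbl -E H1; by [].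
Qed.

Theorem mainTheorem3 (k : nat) (T : finType) (hk : 0 < k) (hT : #|T| = k) :
  exists s : seq (seq T),
    [/\ uniq s, (forall w : seq T, w \in s <-> extremalXYX w) & size s = k`!].
Proof.
exists (map (@dbl T) (permutations (enum T))); split.
- rewrite map_inj_uniq ?permutations_uniq //; exact: dbl_inj.
- move=> w; split.
  + case/mapP => p; rewrite mem_permutations => pe ->.
    have up : uniq p by rewrite (perm_uniq pe) enum_uniq.
    have mp : forall x, x \in p by move=> x; rewrite (perm_mem pe) mem_enum.
    split; first by apply/avoids_av; exact: av_dbl.
    move=> V [W1 [W2 [x [E ->]]]]; apply: (@count3 _ x).
    have : count_mem x (W1 ++ W2) = 2 by rewrite -E count_dbl count_uniq_mem // mp.
    by rewrite !count_cat /= eqxx add1n addnS => ->.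
  + move=> [/avoids_av aw ext].
    have allin : forall x, x \in w.
      move=> x; case E: (x \in w) => //.
      have : containsXYX (x :: w) by apply: ext; exists [::], w, x.
      move/avP; rewrite /= aw andbT negbK => /mem_behead; by rewrite E.
    have c2 : forall z, z \in w -> count_mem z w = 2.
      move=> z zw.
      have c0 : 0 < count_mem z w by rewrite -has_count has_pred1.
      have c3 : count_mem z w <= 2.
        rewrite leqNgt; apply/negP => /count3 /avP; by rewrite aw.
      case c1: (count_mem z w == 1); last first.
        by apply/eqP; rewrite eqn_leq c3 /=; move: c0 c1; case: (count_mem z w) => [|[|]].
      exfalso; move: c1 => /eqP c1.
      case/splitPr: zw c1 aw ext => W1 W2.
      rewrite count_cat /= eqxx => c1 aw ext.
      rewrite add1n in c1.
      rewrite addnS in c1; case: c1 => /eqP; rewrite addn_eq0 => /andP [/eqP h1 /eqP h2].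
      have : containsXYX (W1 ++ z :: z :: W2) by apply: ext; exists W1, (z :: W2), z.
      move/avP; rewrite av_ins //; apply/count_memPn; by [].
    case: (av_struct (leqnn _) aw c2) => p [up E].
    apply/mapP; exists p => //; rewrite mem_permutations.
    apply: uniq_perm => //; first exact: enum_uniq.
    by move=> x; rewrite mem_enum -mem_dbl -E allin.
- by rewrite size_map size_permutations ?enum_uniq // -cardE hT.
Qed.
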